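(* Let $G=(V,E,w)$ be any weighted undirected graph, $\beta\in(0,1)$, and $\mathcal T$ a $\beta$-balanced HC-tree of $G$. Define $$W(G):=\sum_{\substack{\text{internal nodes } u \text{ of } \mathcal T\\ (A,B):=\mathrm{cut}(\mathcal T[u])}}\frac12\big(w(A,\bar A)+w(B,\bar B)\big)\cdot|A\cup B|.$$ Then $C_G(\mathcal T)\le W(G)\le \frac1\beta\, C_G(\mathcal T)$.
   Context: Let $G=(V,E,w)$ be an undirected graph with nonnegative edge weights $w$. A hierarchical clustering tree (HC-tree) of $G$ is a rooted tree $\mathcal T$ whose leaves are in bijection with $V$. For a node $z$, $\mathcal T[z]$ is the subtree rooted at $z$ and $\mathrm{leaves}(\mathcal T[z])\subseteq V$ its set of leaves. For $u,v\in V$, $u\vee v$ denotes their lowest common ancestor in $\mathcal T$. The cost of $\mathcal T$ on $G$ is $C_G(\mathcal T)=\sum_{(u,v)\in E} w(u,v)\,|\mathrm{leaves}(\mathcal T[u\vee v])|$. For disjoint $A,B\subseteq V$, $w(A,B)$ denotes the total weight of edges with one endpoint in $A$ and the other in $B$, and $\bar A=V\setminus A$. If $\mathcal T$ is binary and $z$ is an internal node with children $z_1,z_2$, where $|\mathrm{leaves}(\mathcal T[z_1])|\le|\mathrm{leaves}(\mathcal T[z_2])|$, then $\mathrm{cut}(\mathcal T[z]):=(A,B)$ with $A=\mathrm{leaves}(\mathcal T[z_1])$, $B=\mathrm{leaves}(\mathcal T[z_2])$. For $0<\beta<1$, a pair of disjoint sets $(A,B)$ is $\beta$-balanced if $\max\{|A|,|B|\}\le(1-\beta)|A\cup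 B|$; a binary HC-tree is $\beta$-balanced if $\mathrm{cut}(\mathcal T[z])$ is $\beta$-balanced for every internal node $z$. *)

(* Defs.v *)
From HB Require Import structures.
From mathcomp Require Import all_boot all_order all_algebra.
Set Implicit Arguments. Unset Strict Implicit. Unset Printing Implicit Defensive.
Import Order.TTheory GRing.Theory Num.Theory.
Local Open Scope ring_scope.

Inductive btree (V : Type) : Type :=
  | Leaf of V
  | Node of btree V & btree V.
Arguments Leaf {V}.
Arguments Node {V}.

Section HC.
Variable V : finType.

Fixpoint leaves (t : btree V) : seq V :=
  match t with Leaf v => [:: v] | Node l r => leaves l ++ leaves r end.

Definition leafset (t : btree V) : {set V} := [set x in leaves t].

Definition is_HC_tree (t : btree V) : Prop :=
  uniq (leaves t) /\ forall v : V, v \in leaves t.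

(* The subtree T[u \/ v] rooted at the lowest common ancestor of u and v
   (for u, v leaves of t). *)
Fixpoint lca (t : btree V) (u v : V) : btree V :=
  match t with
  | Leaf _ => t
  | Node l r =>
      if (u \in leaves l) && (v \in leaves l) then lca l u v
      else if (u \in leaves r) && (v \in leaves r) then lca r u v
      else t
  end.

Variable R : realFieldType.

Definition wcut (w : V -> V -> R) (A B : {set V}) : R :=
  \sum_(a in A) \sum_(b in B) w a b.

(* Weighted undirected (loopless) graph given by a symmetric nonnegative
   weight function; weight 0 means "no edge". *)
Definition weighted_graph (w : V -> V -> R) : Prop :=
  (forall x y, w x y = w y x) /\ (forall x y, 0 <= w x y) /\ (forall x, w x x = 0).

(* C_G(T) = sum over undirected edges {u,v} of w(u,v) |leaves(T[u \/ v])|;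
   each unordered edge appears twice among ordered pairs, hence the 1/2. *)
Definition hc_cost (w : V -> V -> R) (t : btree V) : R :=
  2^-1 * \sum_(u : V) \sum_(v : V) w u v * #|leafset (lca t u v)|%:R.

Definition cut (l r : btree V) : {set V} * {set V} :=
  if (#|leafset l| <= #|leafset r|)%N then (leafset l, leafset r)
  else (leafset r, leafset l).

Definition balanced_pair (beta : R) (A B : {set V}) : bool :=
  (maxn #|A| #|B|)%:R <= (1 - beta) * #|A :|: B|%:R.

Fixpoint beta_balanced (beta : R) (t : btree V) : bool :=
  match t with
  | Leaf _ => true
  | Node l r => [&& balanced_pair beta (cut l r).1 (cut l r).2,
                  beta_balanced beta l & beta_balanced beta r]
  end.

Fixpoint Wsum (w : V -> V -> R) (t : btree V) : R :=
  match t with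
  | Leaf _ => 0
  | Node l r =>
      let A := (cut l r).1 in let B := (cut l r).2 in
      2^-1 * (wcut w A (~: A) + wcut w B (~: B)) * #|A :|: B|%:R
      + Wsum w l + Wsum w r
  end.

End HC.

(* Main.v *)
Require Import Defs.
From HB Require Import structures.
From mathcomp Require Import all_boot all_order all_algebra.
From mathcomp Require Import ring lra.
Import Order.TTheory GRing.Theory Num.Theory.
Local Open Scope ring_scope.

Section Aux.
Variable V : finType.
Variable R : realFieldType.

Fixpoint PP (t : btree V) (u v : V) : R :=
  match t with
  | Leaf _ => 0
  | Node l r => #|leafset l :|: leafset r|%:R *
      (((u \in leaves l) && (v \notin leaves l))%:R
       + ((u \in leaves r) && (v \notin leaves r))%:R)
      + PP l u v + PP r u v
  end.

Lemma in_leafset (t : btree V) (x : V) : (x \in leafset t) = (x \in leaves t).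
Proof. by rewrite inE. Qed.

Lemma leafsetN (l r : btree V) : leafset (Node l r) = leafset l :|: leafset r.
Proof. by apply/setP => x; rewrite !inE mem_cat. Qed.

Lemma PP0 (t : btree V) (u v : V) : u \notin leaves t -> PP t u v = 0.
Proof.
elim: t => [x|l IHl r IHr] //= ; rewrite mem_cat negb_or => /andP[ul ur].
by rewrite IHl // IHr // (negbTE ul) (negbTE ur) /= !addr0 mulr0.
Qed.

Lemma PPge0 (t : btree V) (u v : V) : 0 <= PP t u v.
Proof.
elim: t => [x|l IHl r IHr] //=.
by rewrite !addr_ge0 // mulr_ge0 // addr_ge0.
Qed.

Lemma card_sub (beta : R) (l r : btree V) :
  balanced_pair beta (cut l r).1 (cut l r).2 ->
  #|leafset l|%:R <= (1 - beta) * #|leafset l :|: leafset r|%:R /\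
  #|leafset r|%:R <= (1 - beta) * #|leafset l :|: leafset r|%:R.
Proof.
rewrite /cut /balanced_pair; case: ifP => _ /= H.
  split; apply: le_trans H; rewrite ler_nat ?leq_maxl ?leq_maxr //.
rewrite setUC in H.
split; apply: le_trans H; rewrite ler_nat ?leq_maxl ?leq_maxr //.
Qed.

Lemma Qb (beta : R) (t : btree V) (u v : V) : 0 < beta ->
  uniq (leaves t) -> beta_balanced beta t ->
  u \in leaves t -> v \notin leaves t ->
  PP t u v <= beta^-1 * #|leafset t|%:R.
Proof.
move=> b0; elim: t => [x|l IHl r IHr] /=.
  by move=> *; rewrite mulr_ge0 // invr_ge0 ltW.
rewrite cat_uniq => /and3P[ul dj ur] /and3P[bp bl br].
rewrite mem_cat => uin; rewrite mem_cat negb_or => /andP[vl vr].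
have [cl cr] := @card_sub beta l r bp.
rewrite leafsetN (negbTE vl) (negbTE vr) !andbT.
have ib0 : 0 <= beta^-1 by rewrite invr_ge0 ltW.
set S := #|leafset l :|: leafset r|%:R.
have key : forall x : R, x <= (1 - beta) * S -> S + beta^-1 * x <= beta^-1 * S.
  move=> x hx.
  have h1 : beta^-1 * x <= beta^-1 * ((1 - beta) * S) by rewrite ler_wpM2l.
  have h2 : beta^-1 * ((1 - beta) * S) = beta^-1 * S - S.
    by field; rewrite gt_eqF.
  lra.
case/orP: uin => [ul' | ur'].
  have unr : u \notin leaves r.
    apply: contra dj => h; apply/hasP; exists u => //.
  rewrite ul' (negbTE unr) (PP0 _ _ _ unr) /= !addr0 mulr1.
  apply: le_trans (key _ cl); rewrite lerD2l; exact: IHl.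
have unl : u \notin leaves l.
  apply/negP => h; move/negP: dj; apply; apply/hasP; exists u => //.
rewrite ur' (negbTE unl) (PP0 _ _ _ unl) /= add0r !addr0 mulr1.
apply: le_trans (key _ cr); rewrite lerD2l; exact: IHr.
Qed.

Lemma Mb (beta : R) (t : btree V) (u v : V) : 0 < beta ->
  uniq (leaves t) -> beta_balanced beta t ->
  u \in leaves t -> v \in leaves t -> u != v ->
  #|leafset (lca t u v)|%:R <= PP t u v /\
  PP t u v <= beta^-1 * #|leafset (lca t u v)|%:R.
Proof.
move=> b0; elim: t => [x|l IHl r IHr] /=.
  by move=> _ _; rewrite !inE => /eqP -> /eqP ->; rewrite eqxx.
rewrite cat_uniq => /and3P[ul dj ur] /and3P[bp bl br].
have dis : forall y, y \in leaves l -> y \notin leaves r.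
  by move=> y yl; apply: contra dj => h; apply/hasP; exists y.
rewrite !mem_cat => uin vin uv.
case: ifP => [/andP[ul' vl'] | H1].
  rewrite ul' vl' (negbTE (dis _ ul')) /= (PP0 _ _ _ (dis _ ul')) !addr0 mulr0 add0r.
  exact: IHl.
case: ifP => [/andP[ur' vr'] | H2].
  have unl : u \notin leaves l by apply/negP => h; move: (dis _ h); rewrite ur'.
  rewrite ur' vr' (negbTE unl) /= (PP0 _ _ _ unl) !addr0 mulr0 add0r.
  exact: IHr.
rewrite leafsetN.
have ib0 : 0 <= beta^-1 by rewrite invr_ge0 ltW.
have [cl cr] := @card_sub beta l r bp.
set S := #|leafset l :|: leafset r|%:R.
have key : forall x : R, x <= (1 - beta) * S -> S + beta^-1 * x <= beta^-1 * S.
  move=> x hx.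
  have h1 : beta^-1 * x <= beta^-1 * ((1 - beta) * S) by rewrite ler_wpM2l.
  have h2 : beta^-1 * ((1 - beta) * S) = beta^-1 * S - S.
    by field; rewrite gt_eqF.
  lra.
case/orP: uin => [ul' | ur'].
  have vnl : v \notin leaves l by apply/negP => h; move: H1; rewrite ul' h.
  have unr := dis _ ul'.
  rewrite ul' vnl (negbTE unr) (PP0 _ _ _ unr) /= !addr0 mulr1.
  split; first by rewrite lerDl PPge0.
  apply: le_trans (key _ cl); rewrite lerD2l; apply: Qb => //.
have unl : u \notin leaves l by apply/negP => h; move: (dis _ h); rewrite ur'.
have vnr : v \notin leaves r by apply/negP => h; move: H2; rewrite ur' h.
rewrite ur' vnr (negbTE unl) (PP0 _ _ _ unl) /= add0r !addr0 mulr1.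
split; first by rewrite lerDl PPge0.
apply: le_trans (key _ cr); rewrite lerD2l; apply: Qb => //.
Qed.

Lemma wcutE (w : V -> V -> R) (X : {set V}) :
  wcut w X (~: X) = \sum_u \sum_v w u v * ((u \in X) && (v \notin X))%:R.
Proof.
rewrite /wcut big_mkcond; apply: eq_bigr => u _.
case: (u \in X) => /=.
  rewrite big_mkcond; apply: eq_bigr => v _; rewrite inE.
  by case: (v \in X) => /=; rewrite ?mulr1 ?mulr0.
by rewrite big1 // => v _; rewrite mulr0.
Qed.

Lemma sum2D (f g : V -> V -> R) :
  \sum_u \sum_v (f u v + g u v) = \sum_u \sum_v f u v + \sum_u \sum_v g u v.
Proof. by rewrite -big_split; apply: eq_bigr => u _; rewrite big_split. Qed.

Lemma sum2Z (c : R) (f : V -> V -> R) :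
  \sum_u \sum_v c * f u v = c * \sum_u \sum_v f u v.
Proof. by rewrite mulr_sumr; apply: eq_bigr => u _; rewrite mulr_sumr. Qed.

Lemma WsumE (w : V -> V -> R) (t : btree V) :
  Wsum w t = \sum_u \sum_v w u v * (2^-1 * PP t u v).
Proof.
elim: t => [x|l IHl r IHr] /=.
  by rewrite big1 // => u _; rewrite big1 // => v _; rewrite mulr0 mulr0.
have ->: 2^-1 * (wcut w (cut l r).1 (~: (cut l r).1) + wcut w (cut l r).2 (~: (cut l r).2))
    * #|(cut l r).1 :|: (cut l r).2|%:R =
    2^-1 * (wcut w (leafset l) (~: leafset l) + wcut w (leafset r) (~: leafset r))
    * #|leafset l :|: leafset r|%:R.
  by rewrite /cut; case: ifP => //= _; rewrite setUC addrC.
rewrite IHl IHr !wcutE.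
set S := #|leafset l :|: leafset r|%:R.
transitivity (\sum_u \sum_v ((2^-1 * S) * (w u v * ((u \in leafset l) && (v \notin leafset l))%:R)
   + (2^-1 * S) * (w u v * ((u \in leafset r) && (v \notin leafset r))%:R)
   + w u v * (2^-1 * PP l u v) + w u v * (2^-1 * PP r u v))).
  by rewrite !sum2D !sum2Z; ring.
apply: eq_bigr => u _; apply: eq_bigr => v _.
rewrite !in_leafset; ring.
Qed.
End Aux.

Theorem lemma3p2 (R : realFieldType) (V : finType) (w : V -> V -> R)
    (beta : R) (T : btree V) :
  weighted_graph w -> 0 < beta < 1 ->
  is_HC_tree T -> beta_balanced beta T ->
  hc_cost w T <= Wsum w T /\ Wsum w T <= beta^-1 * hc_cost w T.
Proof.
move=> [wsym [wge0 wdiag]] /andP[b0 b1] [uq allin] bal.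
rewrite WsumE /hc_cost.
have h2 : (0 : R) <= 2^-1 by rewrite invr_ge0 ler0n.
split.
  rewrite mulr_sumr; apply: ler_sum => u _; rewrite mulr_sumr; apply: ler_sum => v _.
  case: (eqVneq u v) => [<-|uv]; first by rewrite wdiag !mul0r mulr0.
  have [l1 _] := @Mb V R beta T u v b0 uq bal (allin u) (allin v) uv.
  rewrite mulrCA; apply: ler_wpM2l => //; exact: ler_wpM2l.
rewrite mulrA mulr_sumr; apply: ler_sum => u _; rewrite mulr_sumr; apply: ler_sum => v _.
case: (eqVneq u v) => [<-|uv]; first by rewrite wdiag !mul0r mulr0.
have [_ l2] := @Mb V R beta T u v b0 uq bal (allin u) (allin v) uv.
apply: le_trans (_ : w u v * (2^-1 * (beta^-1 * #|leafset (lca T u v)|%:R)) <= _).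
  by apply: ler_wpM2l => //; exact: ler_wpM2l.
set L := #|leafset (lca T u v)|%:R.
rewrite mulrCA [beta^-1 * 2^-1]mulrC -mulrA mulrCA [w u v * L]mulrC !mulrA.
set a := w u v. set b := beta^-1. set c := (2^-1 : R).
have -> : a * c * b * L = c * b * L * a by ring.
by [].
Qed.
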